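(* There is a ring homomorphism $\lambda\colon\mathrm{B}(\mathcal{R})\to\mathrm{B}(\mathbb{Z})$ such that for every finite connected rack $R$, $$\lambda(b(R))=\sum_{n\geq1}\lambda_n(R)\,c_n,$$ where $\lambda_n(R)$ is the number of $n$-cycles in the cycle decomposition of a left multiplication $\ell_x$ of $R$ (for any $x\in R$; this does not depend on $x$).
   Context: A rack is a set $R$ with a binary operation $\rhd$ such that every left multiplication $\ell_a\colon b\mapsto a\rhd b$ is a bijection and $a\rhd(b\rhd c)=(a\rhd b)\rhd(a\rhd c)$ for all $a,b,c$. The inner automorphism group $\mathrm{Inn}(R)$ is the subgroup of the symmetric group on $R$ generated by all $\ell_a$; a rack is connected if it is non-empty and $\mathrm{Inn}(R)$ acts transitively on $R$. A subrack is a subset $S$ with $\ell_s(S)=S$ for all $s\in S$; a decomposition of $R$ into $S$ and $T$ means $S,T$ are disjoint subracks (possibly empty) with $S\cup T=R$. The Burnside ring of finite racks $\mathrm{B}(\mathcal{R})$ is the abelian group generated by symbols $b(R)$, one for each finite rack $R$, subject to $b(R_1)=b(R_2)$ whenever $R_1\cong R_2$ and $b(R)=b(S)+b(T)$ whenever $R$ decomposes into $S$ and $T$, with ring structure $b(R)b(R')=b(R\times R')$ (cartesian product, componentwise operation). $\mathrm{B}(\mathbb{Z})$ is the Grothendieck ring of isomorphism classes of pairs $(X,\pi)$, $X$ a finite set and $\pi$ a permutation of $X$, with addition from disjoint union and multiplication from cartesian product; $c_n$ denotes the class of an $n$-cycle acting on an $n$-element set. *)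

(* Defs.v *)
From HB Require Import structures.
From mathcomp Require Import all_boot fingroup perm action.
Set Implicit Arguments. Unset Strict Implicit. Unset Printing Implicit Defensive.

Record finRack := FinRack {
  rk_car :> finType;
  rk_op : rk_car -> rk_car -> rk_car;
  rk_bij : forall a, bijective (rk_op a);
  rk_sd : forall a b c, rk_op a (rk_op b c) = rk_op (rk_op a b) (rk_op a c)
}.

Definition lperm (R : finRack) (a : R) : {perm R} := perm (bij_inj (rk_bij a)).

Definition Inn (R : finRack) : {group {perm R}} := <<[set lperm a | a : R]>>%G.

Definition connected (R : finRack) : Prop :=
  0 < #|R| /\ [transitive Inn R, on [set: R] | 'P].

Definition rack_hom (R S : finRack) (f : R -> S) : Prop :=
  forall a b, f (rk_op a b) = rk_op (f a) (f b).

Definition rack_iso (R S : finRack) : Prop :=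
  exists f : R -> S, rack_hom f /\ bijective f.

(* R decomposes into (copies of) S and T: S and T embed as rack
   morphisms whose images are disjoint and cover R (the images are then
   exactly a pair of disjoint subracks with union R, up to isomorphism). *)
Definition decomposes (R S T : finRack) : Prop :=
  exists (i : S -> R) (j : T -> R),
    [/\ rack_hom i /\ injective i, rack_hom j /\ injective j,
        [disjoint codom i & codom j] &
        forall x : R, x \in codom i \/ x \in codom j].

Lemma prod_rack_bij (R S : finRack) (a : R * S) :
  bijective (fun b : R * S => (rk_op a.1 b.1, rk_op a.2 b.2)).
Proof.
case: (rk_bij a.1) => g1 h1 k1; case: (rk_bij a.2) => g2 h2 k2.
exists (fun b : R * S => (g1 b.1, g2 b.2)).
  by move=> -[x y] /=; rewrite h1 h2.
by move=> -[x y] /=; rewrite k1 k2.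
Qed.

Lemma prod_rack_sd (R S : finRack) (a b c : R * S) :
  (rk_op a.1 (rk_op b.1 c.1), rk_op a.2 (rk_op b.2 c.2)) =
  (rk_op (rk_op a.1 b.1) (rk_op a.1 c.1), rk_op (rk_op a.2 b.2) (rk_op a.2 c.2)).
Proof. by congr pair; apply: rk_sd. Qed.

Definition prod_rack (R S : finRack) : finRack :=
  @FinRack (R * S)%type (fun a b => (rk_op a.1 b.1, rk_op a.2 b.2))
    (@prod_rack_bij R S) (@prod_rack_sd R S).

Definition pt_rack : finRack :=
  @FinRack unit (fun _ b => b) (fun _ => (@Bijective _ _ id id (fun _ => erefl) (fun _ => erefl)))
    (fun _ _ _ => erefl).

(*  B(Z): Grothendieck ring of finite sets with a permutation           *)

Record permSet := PermSet { ps_car : finType; ps_perm : {perm ps_car} }.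

Definition ps_iso (X Y : permSet) : Prop :=
  exists h : ps_car X -> ps_car Y,
    bijective h /\ forall x, h (ps_perm X x) = ps_perm Y (h x).

Definition sum_fun (A B : Type) (f : A -> A) (g : B -> B) (x : A + B) : A + B :=
  match x with inl a => inl (f a) | inr b => inr (g b) end.

Lemma sum_fun_inj (A B : Type) (f : A -> A) (g : B -> B) :
  injective f -> injective g -> injective (sum_fun f g).
Proof. by move=> fi gi [a|b] [a'|b'] //= [] => [/fi|/gi] ->. Qed.

Definition prod_fun (A B : Type) (f : A -> A) (g : B -> B) (x : A * B) : A * B :=
  (f x.1, g x.2).

Lemma prod_fun_inj (A B : Type) (f : A -> A) (g : B -> B) :
  injective f -> injective g -> injective (prod_fun f g).
Proof. by move=> fi gi [a b] [a' b'] [] /fi -> /gi ->. Qed.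

Definition ps_add (X Y : permSet) : permSet :=
  @PermSet (ps_car X + ps_car Y)%type
    (perm (sum_fun_inj (@perm_inj _ (ps_perm X)) (@perm_inj _ (ps_perm Y)))).

Definition ps_mul (X Y : permSet) : permSet :=
  @PermSet (ps_car X * ps_car Y)%type
    (perm (prod_fun_inj (@perm_inj _ (ps_perm X)) (@perm_inj _ (ps_perm Y)))).

Definition ps_empty : permSet := @PermSet void 1%g.
Definition ps_point : permSet := @PermSet unit 1%g.

Definition ps_cycle (n : nat) : permSet := @PermSet 'I_n (perm (@ordS_inj n)).

(* Elements of B(Z) are formal differences [X] - [Y]. *)
Definition BZ := (permSet * permSet)%type.

(* Grothendieck equality: [X]-[Y] = [X']-[Y'] iff X+Y'+Z ~ X'+Y+Z for some Z *)
Definition bz_eq (u v : BZ) : Prop :=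
  exists Z : permSet,
    ps_iso (ps_add (ps_add u.1 v.2) Z) (ps_add (ps_add v.1 u.2) Z).

Definition bz_add (u v : BZ) : BZ := (ps_add u.1 v.1, ps_add u.2 v.2).
Definition bz_mul (u v : BZ) : BZ :=
  (ps_add (ps_mul u.1 v.1) (ps_mul u.2 v.2), ps_add (ps_mul u.1 v.2) (ps_mul u.2 v.1)).
Definition bz_zero : BZ := (ps_empty, ps_empty).
Definition bz_one : BZ := (ps_point, ps_empty).
Definition bz_c (n : nat) : BZ := (ps_cycle n, ps_empty).

(* B(R) is presented by generators b(R) and relations; a ring
   homomorphism out of it is (by the presentation) exactly an assignment
   R |-> lam R on generators compatible with the relations, with
   lam (R x R') = lam R * lam R' and lam (1-point rack) = 1.  Here
   lam R is a representative in BZ of the image of b(R). *)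
Definition rack_burnside_ring_hom (lam : finRack -> BZ) : Prop :=
  [/\ (forall R1 R2 : finRack, rack_iso R1 R2 -> bz_eq (lam R1) (lam R2)),
      (forall R S T : finRack, decomposes R S T ->
         bz_eq (lam R) (bz_add (lam S) (lam T))),
      (forall R R' : finRack, bz_eq (lam (prod_rack R R')) (bz_mul (lam R) (lam R'))) &
      bz_eq (lam pt_rack) bz_one].

Definition lambda_n (R : finRack) (x : R) (n : nat) : nat :=
  #|[set c in porbits (lperm x) | #|c| == n]|.

(* sum_{n >= 1} lambda_n(R) c_n  (terms with n > #|R| vanish) *)
Definition cycle_term (R : finRack) (x : R) (n : nat) : BZ :=
  iter (lambda_n x n) (bz_add (bz_c n)) bz_zero.
Definition cycle_sum (R : finRack) (x : R) : BZ :=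
  \big[bz_add/bz_zero]_(1 <= n < (#|R|).+1) cycle_term x n.

(* Main.v *)
Require Import Defs.
From mathcomp Require Import all_boot fingroup perm action.
Set Implicit Arguments. Unset Strict Implicit. Unset Printing Implicit Defensive.

Section Basics.
Local Open Scope group_scope.

Lemma lpermE (R : finRack) (a b : R) : lperm a b = rk_op a b.
Proof. by rewrite /lperm permE. Qed.

Definition ra_set (R : finRack) : {set {perm R}} :=
  [set g : {perm R} | [forall a, [forall b, g (rk_op a b) == rk_op (g a) (g b)]]].

Lemma raP (R : finRack) (g : {perm R}) : g \in ra_set R ->
  forall a b, g (rk_op a b) = rk_op (g a) (g b).
Proof. by rewrite inE => /forallP H a b; move/forallP: (H a) => /(_ b) /eqP. Qed.

Lemma raI (R : finRack) (g : {perm R}) : (forall a b, g (rk_op a b) = rk_op (g a) (g b)) ->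
  g \in ra_set R.
Proof. by move=> H; rewrite inE; apply/forallP=> a; apply/forallP=> b; rewrite H. Qed.

Lemma ra_group_set (R : finRack) : group_set (ra_set R).
Proof.
apply/group_setP; split; first by apply: raI => a b; rewrite !perm1.
move=> g h /raP Hg /raP Hh; apply: raI => a b; by rewrite !permM Hg Hh.
Qed.
Canonical ra_group (R : finRack) := group (ra_group_set R).

Lemma lperm_ra (R : finRack) (a : R) : lperm a \in ra_set R.
Proof. by apply: raI => b c; rewrite !lpermE rk_sd. Qed.

Lemma ra_conj (R : finRack) (g : {perm R}) (a : R) : g \in ra_set R ->
  lperm (g a) = (lperm a) ^ g.
Proof.
move=> /raP Hg; apply/permP => z.
by rewrite conjgE !permM lpermE -[in LHS](permKV g z) -Hg lpermE.
Qed.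

Definition InnS (R : finRack) (A : {set R}) : {group {perm R}} :=
  <<[set lperm a | a in A]>>%G.

Lemma InnS_ra (R : finRack) (A : {set R}) : InnS A \subset ra_set R.
Proof. by rewrite gen_subG; apply/subsetP=> _ /imsetP[a _ ->]; apply: lperm_ra. Qed.

Lemma lperm_InnS (R : finRack) (A : {set R}) a : a \in A -> lperm a \in InnS A.
Proof. by move=> aA; apply: mem_gen; apply: imset_f. Qed.

Lemma InnS_sub (R : finRack) (A B : {set R}) : A \subset B -> InnS A \subset InnS B.
Proof. by move=> AB; apply: genS; apply: imsetS. Qed.

Lemma orbit_gen_sub (T : finType) (X : {set {perm T}}) (S : {set T}) y :
  (forall x z, x \in X -> z \in S -> x z \in S) -> y \in S ->
  orbit 'P <<X>> y \subset S.
Proof.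
move=> H yS.
have sub: <<X>> \subset 'N(S | 'P).
  rewrite gen_subG; apply/subsetP => x xX; rewrite !inE.
  by apply/subsetP=> z zS; rewrite inE /= apermE H.
apply/subsetP=> z /orbitP[g gX <-].
by rewrite (astabs_act _ (subsetP sub g gX)).
Qed.

Lemma orbit_subG (T : finType) (G H : {group {perm T}}) y :
  G \subset H -> orbit 'P G y \subset orbit 'P H y.
Proof.
move=> GH; apply/subsetP=> z /orbitP[g gG <-].
by apply: mem_orbit; apply: (subsetP GH).
Qed.

Lemma orbit_closed (T : finType) (G : {group {perm T}}) y z g :
  g \in G -> z \in orbit 'P G y -> g z \in orbit 'P G y.
Proof.
move=> gG /orbitP[h hG <-]; apply/orbitP; exists (h * g); first by rewrite groupM.
by rewrite /= !apermE permM.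
Qed.

End Basics.

Section Comp.
Local Open Scope group_scope.
Variable R : finRack.
Implicit Types (A K P : {set R}) (y z : R).

Definition conn A := [forall y in A, orbit 'P (InnS A) y == A].

Lemma connP A y : conn A -> y \in A -> orbit 'P (InnS A) y = A.
Proof. by move=> /forall_inP H yA; apply/eqP; apply: H. Qed.

Lemma conn_closed A a z : conn A -> a \in A -> z \in A -> lperm a z \in A.
Proof.
move=> cA aA zA; rewrite -(connP cA zA).
by apply: (mem_orbit 'P z (lperm_InnS aA)).
Qed.

Lemma conn_InnS A g z : conn A -> g \in InnS A -> z \in A -> g z \in A.
Proof. by move=> cA gG zA; rewrite -(connP cA zA); apply: (mem_orbit 'P z gG). Qed.

Lemma exists_comp P y :
  (forall a z, a \in P -> z \in P -> lperm a z \in P) -> y \in P ->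
  exists K, [/\ y \in K, K \subset P, conn K &
     forall A, conn A -> y \in A -> A \subset P -> A \subset K].
Proof.
move: {2}#|P| (leqnn #|P|) => n; elim: n P y => [|n IH] P y.
  rewrite leqn0 => /eqP/cards0_eq PE _.
  by rewrite PE inE.
move=> leP HP yP.
set O := orbit 'P (InnS P) y.
have OP : O \subset P.
  apply: orbit_gen_sub => // _ z /imsetP[a aP ->] zP; exact: HP.
have connO : forall z, z \in O -> orbit 'P (InnS P) z = O.
  by move=> z zO; apply/orbit_eqP.
have maxO : forall A, conn A -> y \in A -> A \subset P -> A \subset O.
  move=> A cA yA AP; rewrite -(connP cA yA); apply: orbit_subG; exact: InnS_sub.
have yO : y \in O by apply: orbit_refl.
case: (eqVneq O P) => [EOP|NOP].
  exists P; split => //.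
  apply/forall_inP => z zP; by apply/eqP; rewrite connO ?EOP.
have ltO : #|O| < #|P| by apply: proper_card; rewrite properEneq NOP OP.
have HO : forall a z, a \in O -> z \in O -> lperm a z \in O.
  move=> a z aO zO; rewrite -(connO z zO).
  apply: (mem_orbit 'P z); apply: lperm_InnS; exact: (subsetP OP).
have [K [yK KO cK mK]] := IH O y (leq_trans (leq_trans ltO leP) (leqnn _)) HO yO.
exists K; split => //; first exact: subset_trans KO OP.
move=> A cA yA AP; apply: mK => //; exact: maxO.
Qed.

End Comp.

Section Comp2.
Local Open Scope group_scope.
Variable R : finRack.
Implicit Types (A K P : {set R}) (y z w : R).

Definition good y K :=
  [&& y \in K, conn K & [forall A : {set R}, (conn A && (y \in A)) ==> (A \subset K)]].
Definition comp y := odflt [set y] [pick K | good y K].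

Lemma good_ex y : exists K, good y K.
Proof.
have [K [yK _ cK mK]] := @exists_comp R setT y (fun a z _ _ => in_setT _) (in_setT y).
exists K; rewrite /good yK cK /=; apply/forallP => A; apply/implyP=> /andP[cA yA].
exact: mK (subsetT A).
Qed.

Lemma compP y : good y (comp y).
Proof.
rewrite /comp; case: pickP => [K //|H]; have [K gK] := good_ex y.
by rewrite H in gK.
Qed.

Lemma comp_id y : y \in comp y.
Proof. by case/and3P: (compP y). Qed.
Lemma comp_conn y : conn (comp y).
Proof. by case/and3P: (compP y). Qed.
Lemma comp_max y A : conn A -> y \in A -> A \subset comp y.
Proof.
case/and3P: (compP y) => _ _ /forallP H cA yA.
by move/implyP: (H A); apply; rewrite cA yA.
Qed.

Lemma comp_uniq y K : y \in K -> conn K ->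
  (forall A, conn A -> y \in A -> A \subset K) -> comp y = K.
Proof.
move=> yK cK mK; apply/eqP; rewrite eqEsubset comp_max // andbT.
by apply: mK; [apply: comp_conn | apply: comp_id].
Qed.

Lemma comp_eq y z : z \in comp y -> comp z = comp y.
Proof.
move=> zy.
have s1 : comp y \subset comp z by apply: comp_max => //; apply: comp_conn.
have s2 : comp z \subset comp y.
  by apply: comp_max; [apply: comp_conn | apply: (subsetP s1); apply: comp_id].
by apply/eqP; rewrite eqEsubset s1 s2.
Qed.

Lemma comp_meet y z w : w \in comp y -> w \in comp z -> comp y = comp z.
Proof. by move=> /comp_eq <- /comp_eq <-. Qed.

Lemma comp_lperm y a z : a \in comp y -> z \in comp y -> lperm a z \in comp y.
Proof. by apply: conn_closed; apply: comp_conn. Qed.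

Lemma comp_InnS y g z : g \in InnS (comp y) -> z \in comp y -> g z \in comp y.
Proof. by apply: conn_InnS; apply: comp_conn. Qed.

Definition rep y := odflt y [pick z in comp y].

Lemma rep_in y : rep y \in comp y.
Proof.
rewrite /rep; case: pickP => [z //|H].
by have := H y; rewrite /= comp_id.
Qed.

Lemma rep_comp y z : comp y = comp z -> rep y = rep z.
Proof.
rewrite /rep => E; rewrite E; case: pickP => [//|H].
by have := H z; rewrite /= comp_id.
Qed.

Lemma rep_eq y z : z \in comp y -> rep z = rep y.
Proof. by move/comp_eq/rep_comp. Qed.

Definition pif y := lperm (rep y) y.

Lemma pif_comp y : pif y \in comp y.
Proof. by apply: comp_lperm; [apply: rep_in | apply: comp_id]. Qed.

Lemma pif_inj : injective pif.
Proof.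
move=> y z E; have cy := pif_comp y; have cz := pif_comp z.
rewrite E in cy; have Eyz := comp_meet cy cz.
by move: E; rewrite /pif (rep_comp Eyz) => /perm_inj.
Qed.

Definition piP := perm pif_inj.

Lemma piPE y : piP y = lperm (rep y) y.
Proof. by rewrite permE. Qed.

End Comp2.

Definition lamR (R : finRack) : BZ := (@PermSet R (piP R), ps_empty).

Section Hom.
Local Open Scope group_scope.
Variables R S : finRack.

Lemma orbit_hom (f : R -> S) (A : {set R}) y : rack_hom f ->
  orbit 'P (InnS (f @: A)) (f y) = f @: orbit 'P (InnS A) y.
Proof.
move=> hf; apply/eqP; rewrite eqEsubset; apply/andP; split.
- apply: orbit_gen_sub; last by apply: imset_f; apply: orbit_refl.
  move=> _ _ /imsetP[b /imsetP[a aA ->] ->] /imsetP[v vO ->].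
  rewrite lpermE -hf imset_f // -lpermE; apply: orbit_closed => //; exact: lperm_InnS.
- have sub: orbit 'P (InnS A) y \subset [set v | f v \in orbit 'P (InnS (f @: A)) (f y)].
    apply: orbit_gen_sub; last by rewrite inE orbit_refl.
    move=> _ v /imsetP[a aA ->]; rewrite !inE => H.
    rewrite lpermE hf -lpermE; apply: orbit_closed => //; apply: lperm_InnS; exact: imset_f.
  by apply/subsetP=> _ /imsetP[v vO ->]; have := subsetP sub v vO; rewrite inE.
Qed.

Lemma conn_image (f : R -> S) (A : {set R}) : rack_hom f -> conn A -> conn (f @: A).
Proof.
move=> hf cA; apply/forall_inP => _ /imsetP[a aA ->].
by rewrite orbit_hom // connP.
Qed.

Lemma conn_preimage (f : R -> S) (A : {set R}) : rack_hom f -> injective f -> conn (f @: A) -> conn A.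
Proof.
move=> hf fi cfA; apply/forall_inP => a aA; apply/eqP; apply: (imset_inj fi).
by rewrite /= -orbit_hom // connP // imset_f.
Qed.

Lemma comp_hom (f : R -> S) y : rack_hom f -> injective f ->
  (forall A : {set S}, conn A -> f y \in A -> A \subset [set f v | v in setT]) ->
  f @: comp y = comp (f y).
Proof.
move=> hf fi cl; symmetry; apply: comp_uniq.
- by apply: imset_f; apply: comp_id.
- by apply: conn_image => //; apply: comp_conn.
- move=> A cA yA.
  have EA : A = f @: (f @^-1: A).
    apply/setP => z; apply/idP/imsetP => [zA|[v]]; last by rewrite inE => ? ->.
    have := subsetP (cl A cA yA) z zA; case/imsetP => v _ Ez; exists v => //.
    by rewrite inE -Ez.
  rewrite EA; apply: imsetS; apply: comp_max.
  + by apply: (conn_preimage hf fi); rewrite -EA.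
  + by rewrite inE.
Qed.

End Hom.

Lemma comp_bij (R S : finRack) (f : R -> S) y : rack_hom f -> bijective f ->
  f @: comp y = comp (f y).
Proof.
move=> hf bf; apply: comp_hom => //; first exact: bij_inj.
move=> A _ _; apply/subsetP => z _; case: bf => g fg gf.
by rewrite -[z]gf imset_f.
Qed.

Lemma lamB (R : finRack) (X : permSet) (F : ps_car X -> R) (r : ps_car X -> R) :
  bijective F ->
  (forall w, r w \in comp (F w)) ->
  (forall w1 w2, comp (F w1) = comp (F w2) -> r w1 = r w2) ->
  (forall w, F (ps_perm X w) = lperm (r w) (F w)) ->
  ps_iso X (lamR R).1.
Proof.
move=> bF rin rc Fc.
pose hs w := odflt 1%g [pick g in InnS (comp (F w)) | g (r w) == rep (F w)].
have hsP w : hs w \in InnS (comp (F w)) /\ hs w (r w) = rep (F w).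
  rewrite /hs; case: pickP => [g /andP[gi /eqP ->] //|H].
  have : rep (F w) \in orbit 'P (InnS (comp (F w))) (r w).
    by rewrite connP ?comp_conn // rep_in.
  case/orbitP => g gi Eg; have := H g.
  by rewrite /= gi -Eg /= apermE eqxx.
have hs_eq w1 w2 : comp (F w1) = comp (F w2) -> hs w1 = hs w2.
  by move=> E; rewrite /hs (rc _ _ E) (rep_comp E) E.
pose H w := hs w (F w).
have Hin w : H w \in comp (F w) := comp_InnS (hsP w).1 (comp_id _).
have HC w : comp (H w) = comp (F w) := comp_eq (Hin w).
have Hinj : injective H.
  move=> w1 w2 E.
  have E' : comp (F w1) = comp (F w2) by rewrite -HC E HC.
  by move: E; rewrite /H (hs_eq _ _ E') => /perm_inj; apply: (bij_inj bF).
exists H; split.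
  by apply: (inj_card_bij Hinj); rewrite (bij_eq_card bF).
move=> w; rewrite /= piPE.
have Ec : comp (F (ps_perm X w)) = comp (F w).
  by rewrite Fc; apply: comp_eq; apply: comp_lperm; [exact: rin | exact: comp_id].
have ra := subsetP (InnS_ra _) _ (hsP w).1.
by rewrite /H (hs_eq _ _ Ec) Fc lpermE (raP ra) (hsP w).2 (rep_comp (HC w)) lpermE.
Qed.

Section PermFacts.
Local Open Scope group_scope.

Lemma porbit_fix (T : finType) (s : {perm T}) x i :
  ((s ^+ i) x == x) = (#|porbit s x| %| i)%N.
Proof.
set n := #|porbit s x|.
have n0 : (0 < n)%N by rewrite lt0n card_porbit_neq0.
have Hn : (s ^+ n) x = x by rewrite permX iter_porbit.
have Hk k : (s ^+ (k * n)) x = x.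
  elim: k => [|k IH]; first by rewrite mul0n expg0 perm1.
  by rewrite mulSn expgD permM Hn IH.
rewrite {1}(divn_eq i n) expgD permM Hk /dvdn.
have U := uniq_traject_porbit s x; rewrite -/n in U.
have E0 : x = nth x (traject s x n) 0 by rewrite nth_traject.
rewrite permX [X in _ == X]E0 -(nth_traject s (ltn_pmod i n0) x).
by rewrite nth_uniq ?size_traject ?ltn_pmod.
Qed.

Lemma porbit_eqpow (T : finType) (s : {perm T}) x i j :
  ((s ^+ i) x == (s ^+ j) x) = (i == j %[mod #|porbit s x|]).
Proof.
wlog le : i j / (i <= j)%N.
  move=> H; case: (leqP i j) => [/H //|/ltnW/H]; by rewrite eq_sym => ->; rewrite eq_sym.
rewrite -(subnKC le) expgD permM eq_sym porbit_fix porbit_perm.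
by rewrite subnKC // eq_sym eqn_mod_dvd.
Qed.

Lemma porbit_morph (X Y : finType) (s : {perm X}) (t : {perm Y}) (f : X -> Y) :
  (forall z, f (s z) = t (f z)) ->
  forall i z, f ((s ^+ i) z) = (t ^+ i) (f z).
Proof. by move=> Hf i z; rewrite !permX; elim: i => //= i IH; rewrite Hf IH. Qed.

Lemma porbit_image (X Y : finType) (s : {perm X}) (t : {perm Y}) (f : X -> Y) :
  (forall z, f (s z) = t (f z)) ->
  forall z, porbit t (f z) = f @: porbit s z.
Proof.
move=> Hf z; have Hi := porbit_morph Hf.
apply/setP => w; apply/porbitP/imsetP => [[i ->]|[v /porbitP[i ->] ->]].
  by exists ((s ^+ i) z); [exact: mem_porbit | rewrite Hi].
by exists i; rewrite Hi.
Qed.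

Lemma porbit_card (X Y : finType) (s : {perm X}) (t : {perm Y}) (f : X -> Y) :
  injective f -> (forall z, f (s z) = t (f z)) ->
  forall z, #|porbit t (f z)| = #|porbit s z|.
Proof. by move=> fi Hf z; rewrite (porbit_image Hf) card_imset. Qed.

Lemma porbit_disj (T : finType) (u : {perm T}) z w x :
  w \in porbit u z -> w \in porbit u x -> z \in porbit u x.
Proof.
rewrite -!eq_porbit_mem => /eqP E1 /eqP E2.
by rewrite -E1 E2.
Qed.

Definition cntP (T : finType) (u : {perm T}) (A : {set T}) n :=
  #|[set z in A | #|porbit u z| == n]|.

Lemma cnt_remove (T : finType) (u : {perm T}) (A : {set T}) x m :
  (forall z, z \in A -> porbit u z \subset A) -> x \in A ->
  cntP u (A :\: porbit u x) m =
    cntP u A m - (if m == #|porbit u x| then #|porbit u x| else 0).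
Proof.
move=> HA xA; rewrite /cntP.
have -> : [set z in A :\: porbit u x | #|porbit u z| == m] =
          [set z in A | #|porbit u z| == m] :\: porbit u x.
  by apply/setP => z; rewrite !inE andbA.
rewrite cardsD; congr (_ - _).
have -> : [set z in A | #|porbit u z| == m] :&: porbit u x =
          [set z in porbit u x | m == #|porbit u x|].
  apply/setP => z; rewrite !inE.
  case zx: (z \in porbit u x); rewrite ?andbF ?andbT //.
  have -> : porbit u z = porbit u x by apply/eqP; rewrite eq_porbit_mem.
  by rewrite eq_sym (subsetP (HA x xA)).
by case: eqP => _; [rewrite setIdE setIT | rewrite setIdE setI0 cards0].
Qed.

End PermFacts.

Section IsoGen.
Local Open Scope group_scope.
Variables (X Y : finType) (s : {perm X}) (t : {perm Y}) (y0 : Y).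

Lemma iso_base (A : {set X}) (B : {set Y}) : A = set0 ->
  (forall n, cntP s A n = cntP t B n) ->
  exists h : X -> Y, [/\ {in A &, injective h}, h @: A = B &
                         forall z, z \in A -> h (s z) = t (h z)].
Proof.
move=> A0 Hc; exists (fun _ => y0); split.
- by move=> z1 z2; rewrite A0 inE.
- rewrite A0 imset0; apply/esym/setP => y; rewrite inE; apply/negbTE/negP => yB.
  have := Hc #|porbit t y|; rewrite /cntP A0.
  have -> : [set z in set0 | #|porbit s z| == #|porbit t y|] = set0.
    by apply/setP=> z; rewrite !inE.
  rewrite cards0 => /esym/eqP; rewrite cards_eq0 => /eqP/setP/(_ y).
  by rewrite !inE yB eqxx.
- by move=> z; rewrite A0 inE.
Qed.

Lemma iso_gen (A : {set X}) (B : {set Y}) :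
  (forall z, z \in A -> porbit s z \subset A) ->
  (forall z, z \in B -> porbit t z \subset B) ->
  (forall n, cntP s A n = cntP t B n) ->
  exists h : X -> Y, [/\ {in A &, injective h}, h @: A = B &
                         forall z, z \in A -> h (s z) = t (h z)].
Proof.
move: {2}#|A| (leqnn #|A|) => N; elim: N A B => [|N IH] A B.
  rewrite leqn0 => /eqP H0 _ _ Hc; apply: iso_base Hc; exact: cards0_eq.
move=> leA HA HB Hc.
case: (set_0Vmem A) => [A0|[x0 x0A]]; first by apply: iso_base Hc.
have [y1 [y1B y1n]] : exists y1, y1 \in B /\ #|porbit t y1| = #|porbit s x0|.
  have : (0 < cntP t B #|porbit s x0|)%N.
    by rewrite -Hc /cntP card_gt0; apply/set0Pn; exists x0; rewrite !inE x0A eqxx.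
  by rewrite card_gt0 => /set0Pn[y1]; rewrite !inE => /andP[y1B /eqP]; exists y1.
set A' := A :\: porbit s x0; set B' := B :\: porbit t y1.
have HA' : forall z, z \in A' -> porbit s z \subset A'.
  move=> z; rewrite !inE => /andP[zx zA]; apply/subsetP => w wz.
  rewrite !inE (subsetP (HA z zA)) // andbT.
  by apply/negP => wx; rewrite (porbit_disj wz wx) in zx.
have HB' : forall z, z \in B' -> porbit t z \subset B'.
  move=> z; rewrite !inE => /andP[zx zA]; apply/subsetP => w wz.
  rewrite !inE (subsetP (HB z zA)) // andbT.
  by apply/negP => wx; rewrite (porbit_disj wz wx) in zx.
have Hc' : forall m, cntP s A' m = cntP t B' m.
  by move=> m; rewrite /A' /B' !cnt_remove // y1n Hc.
have ltA : (#|A'| <= N)%N.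
  have : (#|A'| < #|A|)%N.
    apply: proper_card; rewrite properE subsetDl /=.
    by apply/subsetPn; exists x0; rewrite ?inE ?porbit_id.
  by move=> lt; rewrite -ltnS (leq_trans lt leA).
have [h' [h'i h'B h'c]] := IH A' B' ltA HA' HB' Hc'.
pose ix z := oapp (@nat_of_ord _) 0%N [pick i : 'I_#[s] | (s ^+ i) x0 == z].
have ixP z : z \in porbit s x0 -> (s ^+ ix z) x0 = z.
  move=> /porbitPmin[i lti ->]; rewrite /ix; case: pickP => [j /eqP //|H].
  by have := H (Ordinal lti); rewrite /= eqxx.
pose h z := if z \in porbit s x0 then (t ^+ ix z) y1 else h' z.
have hpow i : h ((s ^+ i) x0) = (t ^+ i) y1.
  rewrite /h mem_porbit; apply/eqP; rewrite porbit_eqpow y1n -porbit_eqpow.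
  by rewrite ixP ?mem_porbit.
have hA' z : z \in A' -> h z = h' z.
  by rewrite /h !inE => /andP[/negbTE -> _].
have hB' z : z \in A' -> h z \in B'.
  by move=> zA; rewrite hA' // -h'B imset_f.
have hx z : z \in porbit s x0 -> h z \in porbit t y1.
  by move=> zx; rewrite -(ixP _ zx) hpow mem_porbit.
have inA' z : z \in A -> z \notin porbit s x0 -> z \in A'.
  by move=> zA zx; rewrite !inE zA zx.
exists h; split.
- move=> z1 z2 z1A z2A.
  case: (boolP (z1 \in porbit s x0)) => z1x; case: (boolP (z2 \in porbit s x0)) => z2x.
  + rewrite -(ixP _ z1x) -(ixP _ z2x) !hpow => /eqP.
    by rewrite porbit_eqpow y1n -porbit_eqpow => /eqP.
  + move=> E; have := hB' _ (inA' _ z2A z2x); rewrite -E !inE (hx _ z1x).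
    by [].
  + move=> E; have := hB' _ (inA' _ z1A z1x); rewrite E !inE (hx _ z2x).
    by [].
  + by rewrite !hA' ?inA' //; apply: h'i; apply: inA'.
- apply/setP => y; apply/imsetP/idP.
  + case=> z zA ->; case: (boolP (z \in porbit s x0)) => zx.
      by apply: (subsetP (HB y1 y1B)); apply: hx.
    by have := hB' _ (inA' _ zA zx); rewrite inE => /andP[].
  + move=> yB; case: (boolP (y \in porbit t y1)) => yx.
      case/porbitP: yx => i ->; exists ((s ^+ i) x0); last by rewrite hpow.
      by apply: (subsetP (HA x0 x0A)); apply: mem_porbit.
    have : y \in B' by rewrite !inE yx yB.
    rewrite -h'B => /imsetP[z zA' ->]; exists z; last by rewrite hA'.
    by move: zA'; rewrite inE => /andP[].
- move=> z zA; case: (boolP (z \in porbit s x0)) => zx.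
    by rewrite -(ixP _ zx) -permM -expgSr !hpow expgSr permM.
  have zA' := inA' _ zA zx.
  have szA' : s z \in A'.
    by apply: (subsetP (HA' z zA')); rewrite -{1}[s]expg1 mem_porbit.
  by rewrite !hA' // h'c.
Qed.

End IsoGen.

Section Cnt.
Local Open Scope group_scope.

Definition cnt (X : permSet) n := #|[set z | #|porbit (ps_perm X) z| == n]|.

Lemma cnt_cntP X n : cnt X n = cntP (ps_perm X) setT n.
Proof. by rewrite /cnt /cntP; apply: eq_card => z; rewrite !inE. Qed.

Lemma cnt_card0 (X : permSet) n : #|ps_car X| = 0%N -> cnt X n = 0%N.
Proof. by move=> H; apply/eqP; rewrite -leqn0 -H max_card. Qed.

Lemma iso_cnt (X Y : permSet) : (forall n, cnt X n = cnt Y n) -> ps_iso X Y.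
Proof.
move=> Hc.
case: (pickP (fun _ : ps_car Y => true)) => [y0 _|noY].
  have [h [hi hB hc]] := @iso_gen _ _ (ps_perm X) (ps_perm Y) y0 setT setT
     (fun _ _ => subsetT _) (fun _ _ => subsetT _) (fun n => etrans (esym (cnt_cntP X n)) (etrans (Hc n) (cnt_cntP Y n))).
  exists h; split.
    apply: inj_card_bij; first by move=> a b; apply: hi; rewrite in_setT.
    by rewrite -cardsT -hB -cardsT leq_imset_card.
  by move=> w; rewrite hc ?in_setT.
have noX : ps_car X -> False.
  move=> x; have := Hc #|porbit (ps_perm X) x|.
  have -> : cnt Y #|porbit (ps_perm X) x| = 0%N.
    by apply: cnt_card0; apply: eq_card0 => y; have := noY y.
  move/eqP; rewrite cards_eq0 => /eqP/setP/(_ x); by rewrite !inE eqxx.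
have noY' : ps_car Y -> False by move=> y; have := noY y.
exists (fun x => False_rect _ (noX x)); split.
  by exists (fun y => False_rect _ (noY' y)) => [x|y]; [case: (noX x) | case: (noY' y)].
by move=> x; case: (noX x).
Qed.

Lemma cnt_iso (X Y : permSet) n : ps_iso X Y -> cnt X n = cnt Y n.
Proof.
case=> h [bh hc]; rewrite /cnt.
have E : [set w | #|porbit (ps_perm Y) w| == n] =
         h @: [set z | #|porbit (ps_perm X) z| == n].
  case: (bh) => g hg gh.
  apply/setP => w; apply/idP/imsetP => [|[z]]; rewrite !inE.
    move=> Hw; exists (g w); last by rewrite gh.
    by rewrite inE -(porbit_card (bij_inj bh) hc) gh.
  by move=> Hz ->; rewrite (porbit_card (bij_inj bh) hc).
by rewrite E card_imset //; apply: bij_inj.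
Qed.

Lemma card_sum_set (A B : finType) (P : pred (A + B)) :
  #|[set z | P z]| = (#|[set a | P (inl a)]| + #|[set b | P (inr b)]|)%N.
Proof.
rewrite -!sum1_card big_sumType /=.
by congr (_ + _)%N; apply: eq_bigl => z; rewrite !inE.
Qed.

Lemma cnt_add (X Y : permSet) n : cnt (ps_add X Y) n = (cnt X n + cnt Y n)%N.
Proof.
rewrite /cnt card_sum_set; congr (_ + _)%N; apply: eq_card => z; rewrite !inE.
  rewrite (@porbit_card _ _ (ps_perm X) (ps_perm (ps_add X Y)) inl) //.
    by move=> a b [].
  by move=> w; rewrite /= permE.
rewrite (@porbit_card _ _ (ps_perm Y) (ps_perm (ps_add X Y)) inr) //.
  by move=> a b [].
by move=> w; rewrite /= permE.
Qed.


Lemma iter_ordS m k (z : 'I_m) : val (iter k (@ordS m) z) = ((z + k) %% m)%N.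
Proof.
elim: k => [|k IH] /=; first by rewrite addn0 modn_small.
by rewrite IH -addn1 modnDml addnS addn0 addnS.
Qed.

Lemma cnt_cycle m n : cnt (ps_cycle m) n = if m == n then m else 0%N.
Proof.
case: m => [|m]; first by rewrite cnt_card0 ?card_ord //; case: ifP.
have Hp (z : 'I_m.+1) : porbit (ps_perm (ps_cycle m.+1)) z = setT.
  apply/setP => w; rewrite inE; apply/porbitP; exists (w + m.+1 - z)%N.
  apply: val_inj; rewrite permX /=.
  have -> : iter (w + m.+1 - z) (perm (@ordS_inj m.+1)) z = iter (w + m.+1 - z) (@ordS m.+1) z.
    by apply: eq_iter => v; rewrite permE.
  rewrite iter_ordS subnKC; last by rewrite (leq_trans (ltnW (ltn_ord z))) ?leq_addl.
  by rewrite modnDr modn_small.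
rewrite /cnt; under eq_finset do rewrite Hp cardsT card_ord.
by case: eqP => _; [rewrite cardsT card_ord | rewrite cards0].
Qed.

End Cnt.

Section CycleCount.
Local Open Scope group_scope.

Lemma cnt_lambda (R : finRack) (x : R) n :
  cnt (@PermSet R (lperm x)) n = (n * lambda_n x n)%N.
Proof.
rewrite /cnt /lambda_n /=.
set s := lperm x.
set D := [set z | #|porbit s z| == n].
set P := [set c in porbits s | #|c| == n].
have partP : partition P D.
  apply/and3P; split.
  - apply/eqP/setP => z; apply/bigcupP/idP.
      case=> c; rewrite inE => /andP[/imsetP[w _ E] cn] zc; subst c.
      have E' : porbit s z = porbit s w by apply/eqP; rewrite eq_porbit_mem.
      by rewrite inE E'.
    rewrite inE => zn; exists (porbit s z); last exact: porbit_id.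
    by rewrite inE imset_f.
  - apply/trivIsetP => A B; rewrite !inE => /andP[/imsetP[a _ ->] _] /andP[/imsetP[b _ ->] _] neq.
    rewrite -setI_eq0; apply/eqP/setP => z; rewrite !inE.
    apply/negbTE/negP => /andP[za zb]; move/negP: neq; apply.
    by rewrite eq_porbit_mem (porbit_disj za zb).
  - apply/negP; rewrite inE => /andP[/imsetP[w _ E] _].
    by have := porbit_id s w; rewrite -E inE.
rewrite (card_partition partP).
rewrite (eq_bigr (fun _ => n)); first by rewrite sum_nat_const mulnC.
by move=> c; rewrite inE => /andP[_ /eqP].
Qed.

Lemma cnt_term (R : finRack) (x : R) k i n :
  cnt (iter k (bz_add (bz_c i)) bz_zero).1 n = (k * (if i == n then i else 0))%N /\
  #|ps_car (iter k (bz_add (bz_c i)) bz_zero).2| = 0%N.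
Proof.
elim: k => [|k [IH1 IH2]] /=.
  by rewrite cnt_card0 // card_void.
by rewrite cnt_add IH1 cnt_cycle card_sum IH2 card_void; split => //.
Qed.

Lemma lambda_big (R : finRack) (x : R) n : (#|R| < n)%N -> lambda_n x n = 0%N.
Proof.
move=> lt; apply/eqP; rewrite cards_eq0; apply/eqP/setP => c; rewrite !inE.
apply/negbTE; apply/negP => /andP[/imsetP[w _ ->] /eqP E].
by have := max_card (mem (porbit (lperm x) w)); rewrite E leqNgt lt.
Qed.

Lemma cnt_cycle_sum (R : finRack) (x : R) n :
  cnt (cycle_sum x).1 n = (n * lambda_n x n)%N /\
  #|ps_car (cycle_sum x).2| = 0%N.
Proof.
have H : cnt (cycle_sum x).1 n =
          \sum_(1 <= i < (#|R|).+1) (lambda_n x i * (if i == n then i else 0))%N /\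
         #|ps_car (cycle_sum x).2| = 0%N.
  rewrite /cycle_sum.
  apply: (big_rec2 (fun u m => cnt u.1 n = m /\ #|ps_car u.2| = 0%N)).
    by rewrite cnt_card0 // card_void.
  move=> i u m _ [H1 H2] /=; rewrite cnt_add card_sum H2.
  by have [T1 T2] := cnt_term x (lambda_n x i) i n; rewrite T1 T2 H1.
case: H => -> ->; split => //.
case: (boolP (n \in index_iota 1 (#|R|).+1)) => nin.
  rewrite (bigD1_seq n) ?iota_uniq //.
  rewrite eqxx big1_seq.
    by rewrite /= addn0 mulnC.
  by move=> i /andP[/negbTE -> _]; rewrite muln0.
rewrite big1_seq; last first.
  move=> i /andP[_ iin]; case: eqP => [E|]; last by rewrite muln0.
  by move: nin; rewrite -E iin.
move: nin; rewrite mem_index_iota negb_and -leqNgt -ltnNge.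
case/orP => [n0|lt]; first by move: n0; rewrite leqn0 => /eqP ->.
by rewrite lambda_big ?muln0.
Qed.

End CycleCount.

Lemma bz_eq_cnt (u v : BZ) :
  (forall n, cnt u.1 n + cnt v.2 n = cnt v.1 n + cnt u.2 n)%N -> bz_eq u v.
Proof.
move=> H; exists ps_empty; apply: iso_cnt => n.
by rewrite !cnt_add (@cnt_card0 ps_empty n) ?card_void // !addn0.
Qed.

Lemma cnt_empty n : cnt ps_empty n = 0%N.
Proof. by rewrite cnt_card0 ?card_void. Qed.

Lemma lam_iso (R1 R2 : finRack) : rack_iso R1 R2 -> bz_eq (lamR R1) (lamR R2).
Proof.
case=> f [hf bf].
have Ec w : comp (f w) = f @: comp w := esym (comp_bij w hf bf).
have I : ps_iso (lamR R1).1 (lamR R2).1.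
  apply: (@lamB R2 (lamR R1).1 f (fun w => f (rep w))) => //.
  - by move=> w; rewrite Ec imset_f // rep_in.
  - by move=> w1 w2; rewrite !Ec => /(imset_inj (bij_inj bf)) /rep_comp ->.
  - by move=> w; rewrite /= piPE !lpermE hf.
by apply: bz_eq_cnt => n; rewrite (cnt_iso n I) /= cnt_empty.
Qed.

Lemma closed_codom (R S T : finRack) (i : S -> R) (j : T -> R) :
  rack_hom i -> rack_hom j -> injective j -> (forall s t, i s != j t) ->
  (forall x, (exists s, x = i s) \/ (exists t, x = j t)) ->
  forall a v, exists v', lperm a (i v) = i v'.
Proof.
move=> hi hj ij neq cov a v.
case: (cov a) => [[s ->]|[t ->]].
  by exists (rk_op s v); rewrite lpermE hi.
case: (cov (lperm (j t) (i v))) => [//|[t'' E]].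
case: (rk_bij t) => g fg gf.
have : lperm (j t) (i v) = lperm (j t) (j (g t'')) by rewrite E lpermE -hj gf.
by move/perm_inj => E2; move: (neq v (g t'')); rewrite E2 eqxx.
Qed.

Lemma comp_dec (R S T : finRack) (i : S -> R) (j : T -> R) :
  rack_hom i -> injective i -> rack_hom j -> injective j -> (forall s t, i s != j t) ->
  (forall x, (exists s, x = i s) \/ (exists t, x = j t)) ->
  forall s, comp (i s) = i @: comp s.
Proof.
move=> hi ii hj ij neq cov s; apply/esym; apply: comp_hom => // A cA sA.
rewrite -(connP cA sA); apply: orbit_gen_sub; last by rewrite imset_f.
move=> _ z /imsetP[a _ ->] /imsetP[v _ ->].
have [v' ->] := closed_codom hi hj ij neq cov a v.
by rewrite imset_f.
Qed.

Lemma lam_decomp (R S T : finRack) :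
  decomposes R S T -> bz_eq (lamR R) (bz_add (lamR S) (lamR T)).
Proof.
case=> i [j [[hi ii] [hj ij] dis cov]].
have neq s t : i s != j t.
  by apply/eqP => E; have := disjointFr dis (codom_f i s); rewrite E codom_f.
have cov' x : (exists s, x = i s) \/ (exists t, x = j t).
  by case: (cov x) => /codomP H; [left | right].
have neq' t s : j t != i s by rewrite eq_sym.
have cov'' x : (exists t, x = j t) \/ (exists s, x = i s).
  by case: (cov' x); [right | left].
have Ci := comp_dec hi ii hj ij neq cov'.
have Cj := comp_dec hj ij hi ii neq' cov''.
pose X := ps_add (lamR S).1 (lamR T).1.
pose F (w : ps_car X) : R := match w with inl s => i s | inr t => j t end.
pose r (w : ps_car X) : R := match w with inl s => i (rep s) | inr t => j (rep t) end.
have Finj : injective F.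
  case=> [s1|t1] [s2|t2] //= E.
  - by rewrite (ii _ _ E).
  - by move: (neq s1 t2); rewrite E eqxx.
  - by move: (neq s2 t1); rewrite E eqxx.
  - by rewrite (ij _ _ E).
have I : ps_iso X (lamR R).1.
  apply: (@lamB R X F r).
  - apply: (inj_card_bij Finj).
    have -> : #|R| = #|F @: [set: ps_car X]|.
      rewrite -cardsT; congr #|pred_of_set _|; apply/setP => x; rewrite in_setT; symmetry.
      by case: (cov' x) => [[s ->]|[t ->]]; apply/imsetP; [exists (inl s) | exists (inr t)].
    by rewrite (leq_trans (leq_imset_card _ _)) // cardsT.
  - by case=> [s|t] /=; [rewrite Ci imset_f ?rep_in | rewrite Cj imset_f ?rep_in].
  - case=> [s1|t1] [s2|t2] /=; rewrite ?Ci ?Cj => E.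
    + by rewrite (rep_comp (imset_inj ii E)).
    + by have := imset_f i (comp_id s1); rewrite E => /imsetP[t _ Et]; move: (neq s1 t); rewrite Et eqxx.
    + by have := imset_f i (comp_id s2); rewrite -E => /imsetP[t _ Et]; move: (neq s2 t); rewrite Et eqxx.
    + by rewrite (rep_comp (imset_inj ij E)).
  - by case=> [s|t]; rewrite /= permE /= piPE lpermE ?hi ?hj -lpermE.
apply: bz_eq_cnt => n; rewrite (cnt_iso n I) /= !cnt_add !cnt_empty.
by [].
Qed.

Lemma lam_pt : bz_eq (lamR pt_rack) bz_one.
Proof.
have I : ps_iso (lamR pt_rack).1 ps_point.
  exists (fun _ => tt); split; last by move=> w /=; rewrite perm1.
  by exists (fun _ => tt) => [[]|[]].
by apply: bz_eq_cnt => n; rewrite (cnt_iso n I).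
Qed.

Lemma lam_conn (R : finRack) : connected R -> forall x : R, bz_eq (lamR R) (cycle_sum x).
Proof.
case=> _ tr x.
have EI : InnS [set: R] = Inn R.
  apply/val_inj => /=; congr <<_>>%g; apply/setP => g.
  by apply/imsetP/imsetP => [[a _ ->]|[a _ ->]]; exists a.
have compT (y : R) : comp y = [set: R].
  apply: comp_uniq; first exact: in_setT.
    apply/forall_inP => z _; apply/eqP.
    by move: (atransP tr z (in_setT z)); rewrite -EI.
  by move=> A _ _; apply: subsetT.
have I : ps_iso (@PermSet R (lperm x)) (lamR R).1.
  apply: (@lamB R (@PermSet R (lperm x)) id (fun _ => x)) => //.
  - by exists id.
  - by move=> w; rewrite compT in_setT.
apply: bz_eq_cnt => n.
have [C1 C2] := cnt_cycle_sum x n.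
by rewrite -(cnt_iso n I) cnt_lambda C1 (cnt_card0 _ C2) cnt_empty.
Qed.

Section Prod.
Local Open Scope group_scope.
Variables R1 R2 : finRack.
Local Notation P := (prod_rack R1 R2).

Definition pprod (s : {perm R1}) (t : {perm R2}) : {perm P} :=
  perm (prod_fun_inj (@perm_inj _ s) (@perm_inj _ t)).

Lemma pprodE s t (w : P) : pprod s t w = (s w.1, t w.2).
Proof. by rewrite permE. Qed.

Lemma lperm_prod (a : P) : lperm a = pprod (lperm a.1) (lperm a.2).
Proof. by apply/permP => w; rewrite pprodE !lpermE. Qed.

Lemma pprodM s1 s2 t1 t2 : pprod (s1 * s2) (t1 * t2) = pprod s1 t1 * pprod s2 t2.
Proof. by apply/permP => w; rewrite permM !pprodE !permM. Qed.

Lemma pprod1 : pprod 1 1 = 1.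
Proof. by apply/permP => -[u v]; rewrite pprodE !perm1. Qed.

Lemma pprodV s t : pprod s^-1 t^-1 = (pprod s t)^-1.
Proof. by apply: (mulgI (pprod s t)); rewrite mulgV -pprodM !mulgV pprod1. Qed.

Lemma pprod_ra s t : s \in ra_set R1 -> t \in ra_set R2 -> pprod s t \in ra_set P.
Proof. by move=> /raP Hs /raP Ht; apply: raI => a b; rewrite !pprodE /= Hs Ht. Qed.

Lemma fst_hom : rack_hom (fun w : P => w.1). Proof. by []. Qed.
Lemma snd_hom : rack_hom (fun w : P => w.2). Proof. by []. Qed.

Lemma comp_proj1 (y z : P) : z \in comp y -> z.1 \in comp y.1.
Proof.
move=> zy; have : (fun w : P => w.1) @: comp y \subset comp y.1.
  apply: comp_max; first by apply: (conn_image fst_hom); apply: comp_conn.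
  by apply: (imset_f (fun w : P => w.1)); apply: comp_id.
by move/subsetP; apply; apply: (imset_f (fun w : P => w.1)).
Qed.

Lemma comp_proj2 (y z : P) : z \in comp y -> z.2 \in comp y.2.
Proof.
move=> zy; have : (fun w : P => w.2) @: comp y \subset comp y.2.
  apply: comp_max; first by apply: (conn_image snd_hom); apply: comp_conn.
  by apply: (imset_f (fun w : P => w.2)); apply: comp_id.
by move/subsetP; apply; apply: (imset_f (fun w : P => w.2)).
Qed.

Definition Qs (y : P) : {set P} := setX (comp y.1) (comp y.2).

Lemma inQ (y z : P) : (z \in Qs y) = (z.1 \in comp y.1) && (z.2 \in comp y.2).
Proof. by rewrite inE. Qed.

Lemma Q_closed (y c w : P) : c \in Qs y -> w \in Qs y -> lperm c w \in Qs y.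
Proof.
rewrite !inQ => /andP[c1 c2] /andP[w1 w2].
by rewrite lpermE /= -!lpermE !comp_lperm.
Qed.

Lemma Q_eq (y z : P) : z \in Qs y -> Qs z = Qs y.
Proof. by rewrite inQ => /andP[/comp_eq E1 /comp_eq E2]; rewrite /Qs E1 E2. Qed.

Lemma comp_sub_Q (y : P) : comp y \subset Qs y.
Proof. by apply/subsetP => z zy; rewrite inQ comp_proj1 ?comp_proj2. Qed.

Lemma comp_orbit (y : P) : comp y = orbit 'P (InnS (Qs y)) y.
Proof.
set G := InnS (Qs y); set O := orbit 'P G y.
have yQ : y \in Qs y by rewrite inQ !comp_id.
have OQ : O \subset Qs y.
  by apply: orbit_gen_sub => // _ z /imsetP[c cQ ->] zQ; apply: Q_closed.
have Ocl g w : g \in G -> w \in O -> g w \in O by move=> gG wO; apply: orbit_closed.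
have LG c : c \in Qs y -> lperm c \in G by move=> cQ; apply: lperm_InnS.
have proj1 k : k \in comp y.1 -> exists u, (k, u) \in O.
  move=> ky.
  have : orbit 'P (InnS (comp y.1)) y.1 \subset [set v | [exists u, (v, u) \in O]].
    apply: orbit_gen_sub; last by rewrite inE; apply/existsP; exists y.2; rewrite -surjective_pairing orbit_refl.
    move=> _ v /imsetP[k' k'y ->]; rewrite !inE => /existsP[u vuO].
    apply/existsP; exists (lperm y.2 u).
    have -> : (lperm k' v, lperm y.2 u) = lperm ((k', y.2) : P) (v, u) by rewrite !lpermE.
    by apply: Ocl => //; apply: LG; rewrite inQ /= k'y comp_id.
  rewrite (connP (comp_conn y.1) (comp_id _)) => /subsetP /(_ k ky).
  by rewrite inE => /existsP.
have proj2 k : k \in comp y.2 -> exists u, (u, k) \in O.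
  move=> ky.
  have : orbit 'P (InnS (comp y.2)) y.2 \subset [set v | [exists u, (u, v) \in O]].
    apply: orbit_gen_sub; last by rewrite inE; apply/existsP; exists y.1; rewrite -surjective_pairing orbit_refl.
    move=> _ v /imsetP[k' k'y ->]; rewrite !inE => /existsP[u vuO].
    apply/existsP; exists (lperm y.1 u).
    have -> : (lperm y.1 u, lperm k' v) = lperm ((y.1, k') : P) (u, v) by rewrite !lpermE.
    by apply: Ocl => //; apply: LG; rewrite inQ /= k'y comp_id.
  rewrite (connP (comp_conn y.2) (comp_id _)) => /subsetP /(_ k ky).
  by rewrite inE => /existsP.
have step2a u k' : u \in comp y.2 -> k' \in comp y.2 ->
    pprod 1 ((lperm (lperm k' u))^-1 * lperm u) \in InnS O.
  move=> uy k'y; have [w wuO] := proj2 u uy.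
  have wy : w \in comp y.1 by have := subsetP OQ _ wuO; rewrite inQ => /andP[].
  have p1O : lperm ((w, k') : P) (w, u) \in O.
    by apply: Ocl; last exact: wuO; apply: LG; rewrite inQ /= wy k'y.
  have p2O : lperm ((w, u) : P) (w, u) \in O.
    by apply: Ocl; last exact: wuO; apply: LG; apply: (subsetP OQ).
  have E1 : lperm ((w, k') : P) (w, u) = (lperm w w, lperm k' u) by rewrite !lpermE.
  have E2 : lperm ((w, u) : P) (w, u) = (lperm w w, lperm u u) by rewrite !lpermE.
  have := groupM (groupVr (lperm_InnS p1O)) (lperm_InnS p2O).
  rewrite E1 E2 (lperm_prod (lperm w w, lperm k' u)) (lperm_prod (lperm w w, lperm u u)) /=.
  rewrite -pprodV -pprodM mulVg.
  by rewrite (ra_conj _ (lperm_ra u)) conjgE mulKg.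
have step2b u v : u \in comp y.2 -> v \in comp y.2 ->
    pprod 1 ((lperm v)^-1 * lperm u) \in InnS O.
  move=> uy vy.
  have : orbit 'P (InnS (comp y.2)) u \subset
         [set v | (v \in comp y.2) && (pprod 1 ((lperm v)^-1 * lperm u) \in InnS O)].
    apply: orbit_gen_sub; last by rewrite inE uy mulVg pprod1 group1.
    move=> _ v' /imsetP[k' k'y ->]; rewrite !inE => /andP[v'y Hv'].
    rewrite comp_lperm //=.
    have -> : pprod 1 ((lperm (lperm k' v'))^-1 * lperm u) =
              pprod 1 ((lperm (lperm k' v'))^-1 * lperm v') * pprod 1 ((lperm v')^-1 * lperm u).
      by rewrite -pprodM mulg1 mulgA mulgK.
    by rewrite groupM // step2a.
  rewrite (connP (comp_conn y.2) uy) => /subsetP /(_ v vy).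
  by rewrite inE => /andP[].
have GO : G \subset InnS O.
  rewrite gen_subG; apply/subsetP => _ /imsetP[c cQ ->].
  move: cQ; rewrite inQ => /andP[c1 c2].
  have [u cuO] := proj1 _ c1.
  have u2 : u \in comp y.2 by have := subsetP OQ _ cuO; rewrite inQ => /andP[].
  have -> : lperm c = lperm ((c.1, u) : P) * pprod 1 ((lperm u)^-1 * lperm c.2).
    by rewrite !lperm_prod /= -pprodM mulg1 mulKVg.
  by rewrite groupM ?step2b // lperm_InnS.
have OG : InnS O \subset G by apply: InnS_sub.
have connO : conn O.
  apply/forall_inP => p pO; rewrite eqEsubset; apply/andP; split.
    have EO : orbit 'P G p = O := orbit_eqP pO.
    by rewrite -{2}EO; apply: orbit_subG.
  have EO : orbit 'P G p = O := orbit_eqP pO.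
  by rewrite -{1}EO; apply: orbit_subG.
apply/eqP; rewrite eqEsubset; apply/andP; split.
  rewrite -{1}(connP (comp_conn y) (comp_id y)); apply: orbit_subG; apply: InnS_sub.
  exact: comp_sub_Q.
by apply: comp_max => //; apply: orbit_refl.
Qed.


Lemma comp_G (y z : P) : z \in Qs y -> comp z = orbit 'P (InnS (Qs y)) z.
Proof. by move=> zQ; rewrite comp_orbit (Q_eq zQ). Qed.

Lemma comp_lpermQ (y c w : P) : c \in Qs y -> w \in Qs y -> comp (lperm c w) = comp w.
Proof.
move=> cQ wQ; apply: comp_eq; rewrite (comp_G wQ).
by apply: (mem_orbit 'P w); apply: lperm_InnS.
Qed.

Lemma comp_ra (g : {perm P}) (w : P) : g \in ra_set P -> g @: comp w = comp (g w).
Proof.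
move=> gr; apply: comp_bij; first by move=> a b; rewrite /= (raP gr).
by exists g^-1; [apply: permK | apply: permKV].
Qed.

Definition bb (y : P) : P := (rep y.1, rep y.2).
Definition tau (y : P) : {perm P} := pprod (lperm (rep y.1)) 1.

Lemma tau_ra y : tau y \in ra_set P.
Proof. by apply: pprod_ra; [apply: lperm_ra | apply: group1]. Qed.

Lemma tau_comm y : commute (tau y) (lperm (bb y)).
Proof. by rewrite /commute /tau lperm_prod /= -!pprodM mul1g mulg1. Qed.

Lemma cyc_ra y g : g \in <[tau y]> -> g \in ra_set P.
Proof.
move=> gc; have sub : <[tau y]> \subset ra_set P by rewrite cycle_subG tau_ra.
exact: (subsetP sub).
Qed.

Lemma cyc_lperm y g : g \in <[tau y]> -> lperm (g (bb y)) = lperm (bb y).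
Proof.
move=> gc; rewrite (ra_conj _ (cyc_ra gc)); case/cycleP: gc => i ->.
have C : commute (lperm (bb y)) (tau y ^+ i) by apply: commuteX; apply: commute_sym; apply: tau_comm.
by rewrite conjgE C mulKg.
Qed.


Lemma claimT (y z : P) : z \in Qs y ->
  exists2 g, g \in <[tau y]> & z \in comp (g (bb y)).
Proof.
set x := rep y.1; set x' := rep y.2.
have xK : x \in comp y.1 := rep_in _.
have x'K : x' \in comp y.2 := rep_in _.
have bQ : bb y \in Qs y by rewrite inQ !rep_in.
set S := [set w | (w \in Qs y) && [exists g in <[tau y]>, w \in comp (g (bb y))]].
have Sin w g : w \in Qs y -> g \in <[tau y]> -> w \in comp (g (bb y)) -> w \in S.
  by move=> wQ gc wc; rewrite inE wQ /=; apply/exists_inP; exists g.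
have step w g h : w \in Qs y -> g \in <[tau y]> -> h \in <[tau y]> ->
    w \in comp (g (bb y)) -> forall c, c \in Qs y -> h (lperm c w) \in comp ((g * h) (bb y)).
  move=> wQ gc hc wc c cQ.
  have E1 : comp (lperm c w) = comp (g (bb y)) by rewrite (comp_lpermQ cQ wQ) (comp_eq wc).
  rewrite permM -(comp_ra _ (cyc_ra hc)) imset_f //.
  by rewrite -E1 comp_id.
have st1 : orbit 'P (InnS (comp y.1)) x \subset [set v | ((v, x') : P) \in S].
  apply: orbit_gen_sub; last first.
    rewrite inE; apply: (Sin _ 1); [exact: bQ | exact: group1 | by rewrite perm1 comp_id].
  move=> _ v /imsetP[k ky ->]; rewrite inE => vS; rewrite inE.
  move: vS; rewrite /S => /setIdP[vQ /exists_inP[g gc vc]].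
  have E : ((lperm k v, x') : P) = (lperm (bb y))^-1 (tau y (lperm ((k, x') : P) (v, x'))).
    by rewrite !lperm_prod -pprodV !pprodE /= perm1 !permK.
  have z'Q : ((lperm k v, x') : P) \in Qs y.
    by move: vQ; rewrite !inQ /= => /andP[v1 ->]; rewrite comp_lperm.
  have kQ : ((k, x') : P) \in Qs y by rewrite inQ /= ky x'K.
  have H2 := step _ _ _ vQ gc (cycle_id (tau y)) vc _ kQ.
  apply: (Sin _ (g * tau y)) => //; first by rewrite groupM ?cycle_id.
  have E3 : comp (tau y (lperm ((k, x') : P) (v, x'))) = comp ((lperm k v, x') : P).
    by rewrite -(comp_lpermQ bQ z'Q) E permKV.
  by rewrite -(comp_eq H2) E3 comp_id.
have st2 z1 : z1 \in comp y.1 ->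
    orbit 'P (InnS (comp y.2)) x' \subset [set v | ((z1, v) : P) \in S].
  move=> z1K; apply: orbit_gen_sub; last first.
    rewrite inE; move/subsetP: st1 => /(_ z1); rewrite (connP (comp_conn y.1) xK).
    by rewrite inE; apply.
  move=> _ v /imsetP[k ky ->]; rewrite inE => vS; rewrite inE.
  move: vS; rewrite /S => /setIdP[vQ /exists_inP[g gc vc]].
  have E : ((z1, lperm k v) : P) = (tau y)^-1 (lperm ((x, k) : P) (z1, v)).
    by rewrite !lperm_prod /tau -pprodV !pprodE /= invg1 perm1 permK.
  have z'Q : ((z1, lperm k v) : P) \in Qs y.
    by move: vQ; rewrite !inQ /= => /andP[-> v2]; rewrite comp_lperm.
  have kQ : ((x, k) : P) \in Qs y by rewrite inQ /= ky xK.
  have tc : (tau y)^-1 \in <[tau y]> by rewrite groupV cycle_id.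
  have H2 := step _ _ _ vQ gc tc vc _ kQ.
  apply: (Sin _ (g * (tau y)^-1)) => //; first by rewrite groupM.
  by rewrite E.
move=> zQ; move: (zQ); rewrite inQ => /andP[z1 z2].
move/subsetP: (st2 _ z1) => /(_ z.2); rewrite (connP (comp_conn y.2) x'K) => /(_ z2).
by rewrite inE -surjective_pairing inE => /andP[_ /exists_inP[g gc zc]]; exists g.
Qed.


Definition g1 (y : P) : {perm R1} :=
  odflt 1 [pick g in InnS (comp y.1) | g (rep y).1 == rep y.1].
Definition g2 (y : P) : {perm R2} :=
  odflt 1 [pick g in InnS (comp y.2) | g (rep y).2 == rep y.2].
Definition psi (y : P) : {perm P} :=
  odflt 1 [pick g in <[tau y]> | comp y == comp (g (bb y))].
Definition phi (y : P) : {perm P} := pprod (g1 y) (g2 y).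
Definition Mp (y : P) : {perm P} := phi y * psi y.
Definition Hf (y : P) : P := Mp y y.

Lemma g1P y : g1 y \in InnS (comp y.1) /\ g1 y (rep y).1 = rep y.1.
Proof.
rewrite /g1; case: pickP => [g /andP[gi /eqP ->] //|H].
have : rep y.1 \in orbit 'P (InnS (comp y.1)) (rep y).1.
  by rewrite (connP (comp_conn _) (comp_proj1 (rep_in y))) rep_in.
case/orbitP => g gi Eg; have := H g.
by rewrite /= gi -Eg /= apermE eqxx.
Qed.

Lemma g2P y : g2 y \in InnS (comp y.2) /\ g2 y (rep y).2 = rep y.2.
Proof.
rewrite /g2; case: pickP => [g /andP[gi /eqP ->] //|H].
have : rep y.2 \in orbit 'P (InnS (comp y.2)) (rep y).2.
  by rewrite (connP (comp_conn _) (comp_proj2 (rep_in y))) rep_in.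
case/orbitP => g gi Eg; have := H g.
by rewrite /= gi -Eg /= apermE eqxx.
Qed.

Lemma psiP y : psi y \in <[tau y]> /\ comp y = comp (psi y (bb y)).
Proof.
rewrite /psi; case: pickP => [g /andP[gi /eqP ->] //|H].
have yQ : y \in Qs y by rewrite inQ !comp_id.
have [g gc yc] := claimT yQ.
by have := H g; rewrite /= gc (comp_eq yc) eqxx.
Qed.

Lemma phi_ra y : phi y \in ra_set P.
Proof.
apply: pprod_ra; apply: (subsetP (InnS_ra _)); [exact: (g1P y).1 | exact: (g2P y).1].
Qed.

Lemma phi_rep y : phi y (rep y) = bb y.
Proof. by rewrite /phi pprodE (g1P y).2 (g2P y).2. Qed.

Lemma Mp_eq y y' : y' \in comp y -> Mp y' = Mp y.
Proof.
move=> yy.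
have E1 : comp y'.1 = comp y.1 := comp_eq (comp_proj1 yy).
have E2 : comp y'.2 = comp y.2 := comp_eq (comp_proj2 yy).
have Ey : comp y' = comp y := comp_eq yy.
have Er : rep y' = rep y := rep_eq yy.
have r1 : rep y'.1 = rep y.1 := rep_comp E1.
have r2 : rep y'.2 = rep y.2 := rep_comp E2.
by rewrite /Mp /phi /g1 /g2 /psi /bb /tau r1 r2 E1 E2 Er Ey.
Qed.

Lemma Hf_in y : Hf y \in comp y.
Proof.
have E0 : phi y @: comp y = comp (bb y).
  by rewrite -(comp_eq (rep_in y)) (comp_ra _ (phi_ra y)) phi_rep.
have H1 : phi y y \in comp (bb y) by rewrite -E0 imset_f ?comp_id.
have [pc Ep] := psiP y.
rewrite /Hf /Mp permM Ep -(comp_ra _ (cyc_ra pc)).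
by apply: imset_f.
Qed.

Lemma Hf_inj : injective Hf.
Proof.
move=> y y' E.
have Ec : comp y = comp y' by rewrite -(comp_eq (Hf_in y)) E (comp_eq (Hf_in y')).
have yy : y' \in comp y by rewrite Ec comp_id.
by move: E; rewrite /Hf (Mp_eq yy) => /perm_inj.
Qed.

Lemma Hf_comm y : Hf (piP P y) = lperm (bb y) (Hf y).
Proof.
have py : piP P y \in comp y by rewrite piPE; apply: pif_comp.
have [pc _] := psiP y.
rewrite /Hf (Mp_eq py) /Mp !permM piPE lpermE (raP (phi_ra y)) phi_rep -lpermE.
by rewrite lpermE (raP (cyc_ra pc)) -lpermE cyc_lperm.
Qed.

Lemma prod_iso : ps_iso (lamR P).1 (ps_mul (lamR R1).1 (lamR R2).1).
Proof.
exists Hf; split; first exact: (injF_bij Hf_inj).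
move=> y /=; rewrite Hf_comm [RHS]permE /prod_fun /= !piPE.
have H1 := comp_proj1 (Hf_in y); have H2 := comp_proj2 (Hf_in y).
by rewrite (rep_eq H1) (rep_eq H2) lperm_prod pprodE.
Qed.

End Prod.

Lemma cnt_mul_r0 (X : permSet) n : cnt (ps_mul X ps_empty) n = 0%N.
Proof. by rewrite cnt_card0 //= card_prod card_void muln0. Qed.

Lemma cnt_mul_l0 (X : permSet) n : cnt (ps_mul ps_empty X) n = 0%N.
Proof. by rewrite cnt_card0 //= card_prod card_void mul0n. Qed.

Lemma lam_mul (R1 R2 : finRack) :
  bz_eq (lamR (prod_rack R1 R2)) (bz_mul (lamR R1) (lamR R2)).
Proof.
apply: bz_eq_cnt => n; rewrite (cnt_iso n (prod_iso R1 R2)) /= !cnt_add.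
by rewrite !cnt_mul_r0 !cnt_mul_l0 cnt_empty !addn0.
Qed.

Theorem proposition6p7 :
  exists lam : finRack -> BZ,
    rack_burnside_ring_hom lam /\
    forall R : finRack, connected R ->
      forall x : R, bz_eq (lam R) (cycle_sum x).
Proof.
exists lamR; split; last exact: lam_conn.
split.
- exact: lam_iso.
- exact: lam_decomp.
- exact: lam_mul.
- exact: lam_pt.
Qed.
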